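(* Let $n_1,\dots,n_m$ be positive integers, $n=n_1+\cdots+n_m$, let $\tau$ be a smooth $k$-representation of $M'=M'_{n_1,\dots,n_m}$ on a space $E$, and let $\theta$ be a non-degenerate character of $U=U_{n_1}\times\cdots\times U_{n_m}$. Then $\tau^{(n)}_{\theta}\neq0$ if and only if $\mathrm{Hom}_{k[U]}(\tau,\theta)\neq0$; in particular, this is equivalent to the $(U,\theta)$-coinvariants $E/\langle\tau(u)a-\theta(u)a: u\in U,a\in E\rangle$ of $\tau$ being non-zero.
   Context: $F$ is a non-archimedean locally compact field of residual characteristic $p$, $k$ an algebraically closed field of characteristic $\ell\neq p$. $M_{n_1,\dots,n_m}=\mathrm{GL}_{n_1}(F)\times\cdots\times\mathrm{GL}_{n_m}(F)$ embedded block-diagonally in $\mathrm{GL}_n(F)$, and $M'_{n_1,\dots,n_m}=M_{n_1,\dots,n_m}\cap\mathrm{SL}_n(F)$. $U_{n_i}$ is the upper unitriangular subgroup of $\mathrm{GL}_{n_i}(F)$, and $\theta:U\to k^\times$ is a smooth character trivial on $[U,U]$ and nontrivial on each simple root subgroup. Derivative: for $1\le s\le m$ and $2\le j\le n_s$ let $N_{s,j}\subset U$ be the subgroup of elements equal to the identity in all blocks except block $s$, where the entry is an upper unitriangular matrix whose only possibly nonzero off-diagonal entries are in column $j$, rows $1,\dots,j-1$. List these groups as $N_{m,n_m},N_{m,n_m-1},\dots,N_{m,2},N_{m-1,n_{m-1}},\dots,N_{1,2}$. Put $E_0=E$ and let $E_t$ be the quotient of $E_{t-1}$ by the span of $g a-\theta(g)a$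 for $g$ in the $t$-th group of the list and $a\in E_{t-1}$ (each $E_{t-1}$ is naturally acted on by the later groups of the list). The last quotient, a $k$-vector space, is the $n$-th derivative $\tau^{(n)}_\theta$ (denoted $\tau^{(n_1+\cdots+n_m)}_{\theta,m}$ in the paper). *)

(* Defs.v *)
From HB Require Import structures.
From mathcomp Require Import all_boot all_order all_algebra.
From mathcomp Require Import reals.
Set Implicit Arguments. Unset Strict Implicit. Unset Printing Implicit Defensive.
Import Order.TTheory GRing.Theory Num.Theory.
Local Open Scope ring_scope.

Section Field.
Variables (R : realType) (F : fieldType) (abs : F -> R).

Definition nonarch_abs : Prop :=
  [/\ forall x, abs x = 0 <-> x = 0,
      forall x, 0 <= abs x,
      forall x y, abs (x * y) = abs x * abs y
    & forall x y, abs (x + y) <= Num.max (abs x) (abs y)].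

Definition nontrivial_abs : Prop := exists x, abs x != 0 /\ abs x != 1.

Definition abs_open (O : F -> Prop) : Prop :=
  forall x, O x -> exists2 e : R, 0 < e & forall y, abs (y - x) < e -> O y.

Definition abs_compact (A : F -> Prop) : Prop :=
  forall (I : Type) (O : I -> F -> Prop), (forall i, abs_open (O i)) ->
    (forall x, A x -> exists i, O i x) ->
    exists (m : nat) (f : 'I_m -> I), forall x, A x -> exists j, O (f j) x.

Definition abs_locally_compact : Prop :=
  forall x, exists2 r : R, 0 < r & abs_compact (fun y => abs (y - x) <= r).

Definition nonarch_local_field : Prop :=
  [/\ nonarch_abs, nontrivial_abs & abs_locally_compact].

(* the residue field O_F / p_F has characteristic p *)
Definition residual_char (p : nat) : Prop := prime p /\ abs (p%:R) < 1.
End Field.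

(* block index (0-based) of the global (0-based) index i for sizes ns *)
Fixpoint blk (ns : seq nat) (i : nat) : nat :=
  match ns with
  | [::] => 0%N
  | m :: ns' => if (i < m)%N then 0%N else (blk ns' (i - m)%N).+1
  end.

Section Groups.
Variables (R : realType) (F : fieldType) (abs : F -> R) (ns : seq nat).
Local Notation n := (sumn ns).

Definition blockdiag (A : 'M[F]_n) : Prop :=
  forall i j : 'I_n, blk ns i != blk ns j -> A i j = 0.

Definition Mprime (A : 'M[F]_n) : Prop := blockdiag A /\ \det A = 1.

Definition Uset (A : 'M[F]_n) : Prop :=
  [/\ blockdiag A, forall i : 'I_n, A i i = 1
    & forall i j : 'I_n, (j < i)%N -> A i j = 0].

(* global column c is column j >= 2 (1-based) of its block *)
Definition deriv_col (c : 'I_n) : Prop :=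
  (0 < c)%N /\ blk ns c.-1 = blk ns c.

(* N_{s,j} for the block s and local column j corresponding to global column c *)
Definition Nset (c : 'I_n) (A : 'M[F]_n) : Prop :=
  Uset A /\ forall i j : 'I_n, i != j -> j != c -> A i j = 0.

Definition near1 (e : R) (g : 'M[F]_n) : Prop :=
  forall i j : 'I_n, abs (g i j - (i == j)%:R) < e.

Variables (k : fieldType) (E : lmodType k).

Definition smooth_rep (tau : 'M[F]_n -> E -> E) : Prop :=
  [/\ forall g, Mprime g -> forall (c : k) (a b : E),
        tau g (c *: a + b) = c *: tau g a + tau g b,
      forall a, tau 1%:M a = a,
      forall g h, Mprime g -> Mprime h -> forall a, tau (g *m h) a = tau g (tau h a)
    & forall a, exists2 e : R, 0 < e &
        forall g, Mprime g -> near1 e g -> tau g a = a].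

Definition smooth_char (theta : 'M[F]_n -> k) : Prop :=
  [/\ forall u, Uset u -> theta u != 0,
      forall u v, Uset u -> Uset v -> theta (u *m v) = theta u * theta v
    & exists2 e : R, 0 < e & forall u, Uset u -> near1 e u -> theta u = 1].

(* non-trivial on each simple root subgroup *)
Definition nondeg_char (theta : 'M[F]_n -> k) : Prop :=
  smooth_char theta /\
  forall i j : 'I_n, j = i.+1 :> nat -> blk ns i = blk ns j ->
    exists t : F, theta (1%:M + t *: delta_mx i j) != 1.

Definition inspan (S : E -> Prop) (v : E) : Prop :=
  exists s : seq (k * E), {in s, forall x, S x.2} /\ v = \sum_(x <- s) x.1 *: x.2.

(* kernel of E ->> tau^(n)_theta: unfolding the iterated quotients,
   E_t = E / (sum over the first t groups N of span{g a - theta(g) a}) *)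
Definition deriv_kernel (tau : 'M[F]_n -> E -> E) (theta : 'M[F]_n -> k) : E -> Prop :=
  inspan (fun w => exists c g a, [/\ deriv_col c, Nset c g & w = tau g a - theta g *: a]).

Definition derivative_nonzero tau theta : Prop := exists v, ~ deriv_kernel tau theta v.

Definition Hom_U_nonzero (tau : 'M[F]_n -> E -> E) (theta : 'M[F]_n -> k) : Prop :=
  exists f : E -> k,
    [/\ forall (c : k) (a b : E), f (c *: a + b) = c * f a + f b,
        forall u a, Uset u -> f (tau u a) = theta u * f a
      & exists a, f a != 0].

Definition coinvariants_nonzero (tau : 'M[F]_n -> E -> E) (theta : 'M[F]_n -> k) : Prop :=
  exists v, ~ inspan (fun w => exists u a, Uset u /\ w = tau u a - theta u *: a) v.
End Groups.

(* Main.v *)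
Require Import Defs.
From HB Require Import structures.
From mathcomp Require Import all_boot all_order all_algebra.
From mathcomp Require Import reals.
From mathcomp Require Import boolp classical_sets.
Import Order.TTheory GRing.Theory Num.Theory.
Set Implicit Arguments. Unset Strict Implicit. Unset Printing Implicit Defensive.
Local Open Scope ring_scope.

Section Span.
Variables (k : fieldType) (E : lmodType k).

Lemma inspan0 (S : E -> Prop) : inspan S 0.
Proof. by exists [::]; rewrite big_nil. Qed.

Lemma inspan_gen (S : E -> Prop) x : S x -> inspan S x.
Proof.
move=> Sx; exists [:: (1, x)]; split; last by rewrite big_seq1 scale1r.
by move=> y; rewrite inE => /eqP ->.
Qed.

Lemma inspanD (S : E -> Prop) x y : inspan S x -> inspan S y -> inspan S (x + y).
Proof.
move=> [s [Hs ->]] [t [Ht ->]]; exists (s ++ t); split; last by rewrite big_cat.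
by move=> z; rewrite mem_cat => /orP[/Hs|/Ht].
Qed.

Lemma inspanZ (S : E -> Prop) c x : inspan S x -> inspan S (c *: x).
Proof.
move=> [s [Hs ->]]; exists [seq (c * p.1, p.2) | p <- s]; split.
  by move=> z /mapP[p ps ->]; exact: (Hs p ps).
rewrite big_map scaler_sumr; apply: eq_bigr => p _ /=; by rewrite scalerA.
Qed.

Definition linf (f : E -> k) := forall (c : k) (a b : E), f (c *: a + b) = c * f a + f b.

Lemma linf0 f : linf f -> f 0 = 0.
Proof.
move=> lf; have := lf 1 0 0; rewrite scale1r addr0 mul1r => H.
by apply: (@addrI _ (f 0)); rewrite addr0 -H.
Qed.

Lemma linf_span f (S : E -> Prop) : linf f -> (forall x, S x -> f x = 0) ->
  forall x, inspan S x -> f x = 0.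
Proof.
move=> lf fS x [s [Hs ->]]; elim: s Hs => [|p s IH] Hs; first by rewrite big_nil linf0.
rewrite big_cons lf fS ?mulr0 ?add0r; last by apply: Hs; rewrite inE eqxx.
by apply: IH => z zs; apply: Hs; rewrite inE zs orbT.
Qed.

Lemma linfD f : linf f -> forall a b, f (a + b) = f a + f b.
Proof. by move=> lf a b; rewrite -[a]scale1r lf mul1r scale1r. Qed.
Lemma linfZ f : linf f -> forall c a, f (c *: a) = c * f a.
Proof. by move=> lf c a; rewrite -[c *: a]addr0 lf linf0 // addr0. Qed.
Lemma linfB f : linf f -> forall a b, f (a - b) = f a - f b.
Proof.
move=> lf a b; rewrite linfD // -scaleN1r linfZ //. by rewrite mulN1r.
Qed.

End Span.
Section Sep.
Variables (k : fieldType) (E : lmodType k).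

Definition subsp (W : E -> Prop) := W 0 /\ forall c x y, W x -> W y -> W (c *: x + y).

Lemma subspD W : subsp W -> forall x y, W x -> W y -> W (x + y).
Proof. by move=> [_ H] x y Wx Wy; rewrite -[x]scale1r; apply: H. Qed.
Lemma subspZ W : subsp W -> forall c x, W x -> W (c *: x).
Proof. by move=> [W0 H] c x Wx; rewrite -[c *: x]addr0; apply: H. Qed.
Lemma subspB W : subsp W -> forall x y, W x -> W y -> W (x - y).
Proof. by move=> sW x y Wx Wy; rewrite -scaleN1r; apply: subspD => //; apply: subspZ. Qed.

Lemma inspan_subsp (S : E -> Prop) : subsp (inspan S).
Proof.
split; first exact: inspan0.
by move=> c x y Hx Hy; apply: inspanD => //; apply: inspanZ.
Qed.

Lemma separate (D : E -> Prop) (v : E) : subsp D -> ~ D v ->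
  exists f : E -> k, [/\ linf f, f v = 1 & forall x, D x -> f x = 0].
Proof.
move=> sD Dv.
pose T := {W : E -> Prop | [/\ subsp W, (forall x, D x -> W x) & ~ W v]}.
pose R (x y : T) := `[< forall z, sval x z -> sval y z >].
have t0 : T by exists D.
have [t tmax] : exists t, premaximal R t.
  apply: (ZL_preorder t0).
  - by move=> x; apply/asboolP.
  - by move=> x y z /asboolP H1 /asboolP H2; apply/asboolP => w /H1 /H2.
  move=> A Atot.
  pose U := fun z => D z \/ exists x, A x /\ sval x z.
  have sU : subsp U.
    split; first by left; case: sD.
    move=> c x y [Dx|[a [Aa ax]]] [Dy|[b [Ab bx]]].
    - by left; case: sD => _; apply.
    - right; exists b; split => //; case: (svalP b) => sb Db _.
      by case: sb => _; apply => //; apply: Db.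
    - right; exists a; split => //; case: (svalP a) => sa Da _.
      by case: sa => _; apply => //; apply: Da.
    - have [/asboolP ab|/asboolP ba] := Atot a b Aa Ab.
      + right; exists b; split => //; case: (svalP b) => sb Db _.
        by case: sb => _; apply => //; apply: ab.
      + right; exists a; split => //; case: (svalP a) => sa Da _.
        by case: sa => _; apply => //; apply: ba.
  have DU : forall x, D x -> U x by move=> x; left.
  have Uv : ~ U v.
    by case=> [//|[a [_ av]]]; case: (svalP a) => _ _; apply.
  exists (exist _ U (And3 sU DU Uv)) => s As; apply/asboolP => z sz /=.
  by right; exists s.
case: t tmax => W HW tmax; case: (HW) => sW DW Wv.
have key : forall x, exists c, W (x - c *: v).
  move=> x; have [Wx|Wx] := pselect (W x).
    by exists 0; rewrite scale0r subr0.
  pose W' := fun z => exists w c, W w /\ z = w + c *: x.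
  have [W'v|W'v] := pselect (W' v); last first.
    have sW' : subsp W'.
      split; first by exists 0, 0; rewrite scale0r addr0; split => //; case: sW.
      move=> c y z [w1 [c1 [W1 ->]]] [w2 [c2 [W2 ->]]].
      exists (c *: w1 + w2), (c * c1 + c2); split.
        by case: sW => _; apply.
      by rewrite scalerDr scalerDl scalerA; rewrite -!addrA; congr (_ + _);
        rewrite addrCA.
    have DW' : forall z, D z -> W' z.
      by move=> z Dz; exists z, 0; rewrite scale0r addr0; split => //; apply: DW.
    have := tmax (exist _ W' (And3 sW' DW' W'v)).
    have -> : R (exist _ W HW) (exist _ W' (And3 sW' DW' W'v)).
      by apply/asboolP => z Wz /=; exists z, 0; rewrite scale0r addr0.
    move=> /(_ isT) /asboolP /= H; exfalso; apply: Wx; apply: H.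
    by exists 0, 1; rewrite add0r scale1r; split => //; case: sW.
  case: W'v => w [c [Ww ev]].
  have c0 : c != 0.
    by apply/eqP => c0; apply: Wv; rewrite ev c0 scale0r addr0.
  exists c^-1; rewrite ev.
  suff -> : x - c^-1 *: (w + c *: x) = (- c^-1) *: w by apply: subspZ.
  by rewrite scalerDr scalerA mulVf // scale1r scaleNr opprD addrCA subrr addr0.
have uniq : forall x c d, W (x - c *: v) -> W (x - d *: v) -> c = d.
  move=> x c d Hc Hd; apply/eqP; apply: contraT => cd; exfalso; apply: Wv.
  have := subspB sW Hd Hc; rewrite opprB addrC addrA subrK -scalerBl => H.
  have := subspZ sW (c - d)^-1 H; rewrite scalerA mulVf ?scale1r //.
  by rewrite subr_eq0.
pose f x := projT1 (cid (key x)).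
have fP : forall x, W (x - f x *: v) by move=> x; exact: (projT2 (cid (key x))).
exists f; split.
- move=> c a b; apply: (uniq (c *: a + b)) => //.
  have := subspD sW (subspZ sW c (fP a)) (fP b).
  by rewrite scalerBr scalerA scalerDl; congr W; rewrite opprD !addrA; congr (_ - _);
    rewrite addrAC.
- by apply: (uniq v) => //; rewrite scale1r subrr; case: sW.
- move=> x Dx; apply: (uniq x) => //; rewrite scale0r subr0; exact: DW.
Qed.
End Sep.
Lemma blk_mono (ns : seq nat) i j : (i <= j)%N -> (blk ns i <= blk ns j)%N.
Proof.
elim: ns i j => [//|m ns IH] i j ij /=.
case: ifP => im; case: ifP => jm //.
  by rewrite (leq_ltn_trans ij jm) in im.
by rewrite ltnS; apply: IH; apply: leq_sub2r.
Qed.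

Section Mat.
Variables (F : fieldType) (ns : seq nat).
Local Notation n := (sumn ns).

Definition Pm (u : 'M[F]_n) (t : nat) : 'M[F]_n :=
  \matrix_(i, j) if (j < t)%N then u i j else (i == j)%:R.
Definition Cm (u : 'M[F]_n) (t : 'I_n) : 'M[F]_n :=
  \matrix_(i, j) if j == t then u i j else (i == j)%:R.

Lemma Uset_Mprime (u : 'M[F]_n) : Uset (u : 'M[F]_n) -> Mprime u.
Proof.
move=> [bu du lu]; split => //.
rewrite -det_tr det_trig; last by apply/is_trig_mxP => i j ij; rewrite mxE lu.
by rewrite big1 // => i _; rewrite mxE du.
Qed.

Lemma Uset1 : Uset (1%:M : 'M[F]_n).
Proof.
split.
- by move=> i j bij; rewrite mxE; case: (i =P j) bij => [->|_ _] //; by rewrite eqxx.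
- by move=> i; rewrite mxE eqxx.
- by move=> i j ji; rewrite mxE; case: (i =P j) ji => [->|_ _] //; by rewrite ltnn.
Qed.

Lemma Uset_Pm u t : Uset u -> Uset (Pm (u : 'M[F]_n) t).
Proof.
move=> [bu du lu]; split.
- move=> i j bij; rewrite mxE; case: ifP => _; first exact: bu.
  by case: (i =P j) bij => [->|_ _] //; by rewrite eqxx.
- by move=> i; rewrite mxE eqxx; case: ifP.
- move=> i j ji; rewrite mxE; case: ifP => _; first exact: lu.
  by case: (i =P j) ji => [->|_ _] //; by rewrite ltnn.
Qed.

Lemma Nset_Cm u t : Uset u -> Nset t (Cm (u : 'M[F]_n) t).
Proof.
move=> [bu du lu]; split; first split.
- move=> i j bij; rewrite mxE; case: ifP => _; first exact: bu.
  by case: (i =P j) bij => [->|_ _] //; by rewrite eqxx.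
- by move=> i; rewrite mxE eqxx; case: ifP.
- move=> i j ji; rewrite mxE; case: ifP => _; first exact: lu.
  by case: (i =P j) ji => [->|_ _] //; by rewrite ltnn.
- by move=> i j ij jt; rewrite mxE (negbTE jt) (negbTE ij).
Qed.

Lemma Cm1 u t : Uset u -> ~ deriv_col t -> Cm (u : 'M[F]_n) t = 1%:M.
Proof.
move=> [bu du lu] nd; apply/matrixP => i j; rewrite !mxE.
case: eqP => [->|] //; case: (ltngtP i t) => it.
- rewrite -val_eqE /= (ltn_eqF it); apply: bu; apply/eqP => bit; apply: nd; split.
    by apply: leq_ltn_trans it.
  apply/eqP; rewrite eqn_leq blk_mono ?leq_pred //=.
  have t0 : (0 < t)%N by apply: leq_ltn_trans it.
  by rewrite -bit; apply: blk_mono; rewrite -ltnS prednK.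
- have -> : (i == t) = false by apply/eqP => e; move: it; rewrite e ltnn.
  by apply: lu.
- have -> : i = t by apply: val_inj.
  by rewrite eqxx du.
Qed.

Lemma Pm0 u : Pm (u : 'M[F]_n) 0 = 1%:M.
Proof. by apply/matrixP => i j; rewrite !mxE. Qed.

Lemma Pmn u : Pm (u : 'M[F]_n) n = u.
Proof. by apply/matrixP => i j; rewrite !mxE ltn_ord. Qed.

Lemma PmS u (t : 'I_n) : Uset u -> Pm u t.+1 = Cm u t *m Pm (u : 'M[F]_n) t.
Proof.
move=> [bu du lu].
pose D : 'M[F]_n := \matrix_(i, j) ((j == t)%:R * (u i t - (i == t)%:R)).
have -> : Cm u t = 1%:M + D.
  apply/matrixP => i j; rewrite !mxE; case: eqP => [->|_]; last by rewrite mul0r addr0.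
  by rewrite mul1r addrC subrK.
rewrite mulmxDl mul1mx; apply/matrixP => i j; rewrite !mxE (bigD1 t) //= big1; last first.
  by move=> k /negbTE kt; rewrite !mxE kt mul0r mul0r.
rewrite addr0 !mxE eqxx mul1r ltnS.
case: (ltngtP j t) => jt.
- by rewrite (lu t j jt) mulr0 addr0.
- have -> : (t == j) = false by apply/eqP => e; move: jt; rewrite e ltnn.
  by rewrite mulr0 addr0.
- have -> : j = t by apply: val_inj.
  by rewrite eqxx mulr1 addrC subrK.
Qed.

End Mat.
Lemma U_in_D (F : fieldType) (ns : seq nat) (k : fieldType) (E : lmodType k)
  (tau : 'M[F]_(sumn ns) -> E -> E) (theta : 'M[F]_(sumn ns) -> k)
  (h1 : forall a, tau 1%:M a = a)
  (hmul : forall g h, Mprime g -> Mprime h -> forall a, tau (g *m h) a = tau g (tau h a))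
  (hnz : forall u, Uset u -> theta u != 0)
  (hthm : forall u v, Uset u -> Uset v -> theta (u *m v) = theta u * theta v) :
  forall u, Uset u -> forall a, deriv_kernel tau theta (tau u a - theta u *: a).
Proof.
move=> u Uu.
have th1 : theta 1%:M = 1.
  have := hthm _ _ (@Uset1 F ns) (@Uset1 F ns); rewrite mulmx1 => H.
  apply/esym/(mulfI (hnz _ (@Uset1 F ns))); by rewrite mulr1 -H.
suff : forall t, (t <= sumn ns)%N -> forall a,
    deriv_kernel tau theta (tau (Pm u t) a - theta (Pm u t) *: a).
  by move/(_ (sumn ns) (leqnn _)); rewrite Pmn.
elim=> [|t IH] tn a.
  by rewrite Pm0 h1 th1 scale1r subrr; exact: inspan0.
pose t' : 'I_(sumn ns) := Ordinal tn.
have -> : Pm u t.+1 = Cm u t' *m Pm u t := PmS t' Uu.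
have IH' := IH (ltnW tn).
case: (pselect (deriv_col t')) => dc; last by rewrite Cm1 // mul1mx.
have NC := Nset_Cm t' Uu.
have UC := NC.1.
have UP := Uset_Pm t Uu.
rewrite hmul; try (by apply: Uset_Mprime). rewrite (hthm _ _ UC UP).
set b := tau (Pm u t) a.
have -> : tau (Cm u t') b - (theta (Cm u t') * theta (Pm u t)) *: a =
   (tau (Cm u t') b - theta (Cm u t') *: b) + theta (Cm u t') *: (b - theta (Pm u t) *: a).
  by rewrite scalerBr scalerA addrA subrK.
apply: inspanD; last by apply: inspanZ; apply: IH'.
by apply: inspan_gen; exists t', (Cm u t'), b; split.
Qed.

Theorem proposition4p12
  (R : realType) (F : fieldType) (absF : F -> R) (p : nat)
  (hF : nonarch_local_field absF) (hp : residual_char absF p)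
  (k : closedFieldType) (hl : p \notin [pchar k])
  (ns : seq nat) (hns : all (fun m => 0 < m)%N ns)
  (E : lmodType k) (tau : 'M[F]_(sumn ns) -> E -> E)
  (htau : smooth_rep absF tau)
  (theta : 'M[F]_(sumn ns) -> k) (htheta : nondeg_char absF theta) :
  (derivative_nonzero tau theta <-> Hom_U_nonzero tau theta) /\
  (Hom_U_nonzero tau theta <-> coinvariants_nonzero tau theta).
Proof.
case: htau => hlin h1 hmul _.
case: htheta => [[hnz hthm _] _].
have UD := U_in_D h1 hmul hnz hthm.
have fgen : forall f : E -> k, linf f ->
    (forall u a, Uset u -> f (tau u a) = theta u * f a) ->
    forall u a, Uset u -> f (tau u a - theta u *: a) = 0.
  by move=> f lf fU u a Uu; rewrite linfB // linfZ // fU // subrr.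
have mkHom : forall S : E -> Prop, (forall u a, Uset u -> inspan S (tau u a - theta u *: a)) ->
    (exists v, ~ inspan S v) -> Hom_U_nonzero tau theta.
  move=> S HS [v nv].
  have [f [lf fv f0]] := separate (inspan_subsp S) nv.
  exists f; split => //.
  - move=> u a Uu; apply/eqP; rewrite -subr_eq0 -linfZ // -linfB //.
    by apply/eqP/f0/HS.
  - by exists v; rewrite fv oner_neq0.
split; split.
- by apply: mkHom => u a Uu; apply: UD.
- move=> [f [lf fU [a fa]]]; exists a => Da; move/eqP: fa; apply.
  apply: (linf_span lf) Da => w [c [g [b [dc Ng ->]]]].
  by apply: fgen => //; case: Ng.
- move=> [f [lf fU [a fa]]]; exists a => Da; move/eqP: fa; apply.
  by apply: (linf_span lf) Da => w [u [b [Uu ->]]]; apply: fgen.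
- apply: mkHom => u a Uu; apply: inspan_gen; by exists u, a.
Qed.
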